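(* Let $\Pi$ be a projective plane of order $q^2$ and let $\phi$ be an embedding of the complete bipartite graph $K_{q^2,q^2}$ into $\Pi$. Then for every Baer subplane $\pi$ of $\Pi$, at least $q$ of the lines of $\Pi$ onto which edges of $K_{q^2,q^2}$ are mapped are lines of $\pi$.
   Context: A finite projective plane of order $Q$ has $Q^2+Q+1$ points and lines, $Q+1$ points on each line and $Q+1$ lines through each point; any two distinct points lie on a unique line and any two lines meet in a unique point. A Baer subplane of a plane of order $q^2$ is a set of points and lines of the plane forming a projective plane of order $q$ under the inherited incidence; its lines are lines of $\Pi$. An embedding of a simple graph $G=(V,E)$ into $\Pi$ is an injective map $\phi$ from $V$ to the points of $\Pi$ such that the induced map $\overline{\phi}$ sending an edge $ab$ to the line through $\phi(a),\phi(b)$ is injective on $E$; the lines $\overline{\phi}(E)$ are the embedded edges. *)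

(* Defs.v *)
From mathcomp Require Import all_boot.
Set Implicit Arguments. Unset Strict Implicit. Unset Printing Implicit Defensive.

Definition proj_plane_on (P L : finType) (I : P -> L -> bool) (Q : nat)
    (Ps : {set P}) (Ls : {set L}) : Prop :=
  [/\ #|Ps| = Q ^ 2 + Q + 1 /\ #|Ls| = Q ^ 2 + Q + 1,
      (forall l, l \in Ls -> #|[set x in Ps | I x l]| = Q + 1),
      (forall x, x \in Ps -> #|[set l in Ls | I x l]| = Q + 1),
      (forall x y, x \in Ps -> y \in Ps -> x != y ->
         #|[set l in Ls | I x l && I y l]| = 1) &
      (forall l m, l \in Ls -> m \in Ls -> l != m ->
         #|[set x in Ps | I x l && I x m]| = 1)].

Definition proj_plane (P L : finType) (I : P -> L -> bool) (Q : nat) : Prop :=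
  proj_plane_on I Q [set: P] [set: L].

Definition baer_subplane (P L : finType) (I : P -> L -> bool) (q : nat)
    (Ps : {set P}) (Ls : {set L}) : Prop :=
  proj_plane_on I q Ps Ls.

(* the line through two points (a line incident with both, if any; unique
   when the points are distinct in a projective plane) *)
Definition join (P L : finType) (I : P -> L -> bool) (x y : P) : option L :=
  [pick l | I x l && I y l].

Definition graph_embedding (P L V : finType) (I : P -> L -> bool)
    (e : rel V) (phi : V -> P) : Prop :=
  injective phi /\
  (forall a b c d, e a b -> e c d ->
     join I (phi a) (phi b) = join I (phi c) (phi d) ->
     [set a; b] = [set c; d]).

Definition embedded_edges (P L V : finType) (I : P -> L -> bool)
    (e : rel V) (phi : V -> P) : {set L} :=
  [set l | [exists a, exists b, e a b && (join I (phi a) (phi b) == Some l)]].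

Definition Knn_rel (n : nat) : rel ('I_n + 'I_n)%type :=
  fun x y => match x, y with
             | inl _, inr _ => true
             | inr _, inl _ => true
             | _, _ => false
             end.

(* Main.v *)
Require Import Defs.
From mathcomp Require Import all_boot.
From mathcomp Require Import zify.

Theorem corollary4p13 (P L : finType) (I : P -> L -> bool) (q : nat)
    (phi : ('I_(q ^ 2) + 'I_(q ^ 2))%type -> P) :
  proj_plane I (q ^ 2) ->
  graph_embedding I (@Knn_rel (q ^ 2)) phi ->
  forall (Ps : {set P}) (Ls : {set L}),
    baer_subplane I q Ps Ls ->
    q <= #|embedded_edges I (@Knn_rel (q ^ 2)) phi :&: Ls|.
Proof.
move=> [[cP cL] _ _ H2 _] [phiI ejI] Ps Ls [[_ cLs] _ _ _ _].
set E := embedded_edges _ _ _.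
set Q := q ^ 2 in cP cL H2 phiI ejI E *.
pose g := fun ij : 'I_Q * 'I_Q => join I (phi (inl ij.1)) (phi (inr ij.2)).
have gS : forall ij, exists l, g ij = Some l /\ l \in E.
  move=> [i j]; rewrite /g.
  case Ej: (join I (phi (inl i)) (phi (inr j))) => [l|].
    exists l; split => //; rewrite inE; apply/existsP; exists (inl i).
    by apply/existsP; exists (inr j); rewrite /= Ej.
  move: Ej; rewrite /join; case: pickP => // H0 _.
  have : phi (inl i) != phi (inr j) by apply/eqP => /phiI.
  move=> /(H2 _ _ (in_setT _) (in_setT _)).
  suff -> : [set l in [set: L] | I (phi (inl i)) l && I (phi (inr j)) l] = set0
    by rewrite cards0.
  by apply/setP => l; rewrite !inE H0.
have ginj : injective g.
  move=> [i j] [i' j'] /= Hg.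
  have := ejI (inl i) (inr j) (inl i') (inr j') isT isT Hg.
  move/setP => H; have := H (inl i); have := H (inr j); rewrite !inE /=.
  rewrite !eqxx /= => /esym/eqP[->] /esym; rewrite orbF => /eqP[->] //.
have sub : g @: setT \subset Some @: E.
  apply/subsetP => x /imsetP [ij _ ->]; have [l [-> lE]] := gS ij.
  by apply/imsetP; exists l.
have cg : #|g @: setT| = Q * Q.
  by rewrite card_imset // cardsT card_prod card_ord.
have cE : Q * Q <= #|E|.
  by rewrite -cg -(card_imset E (@Some_inj _)); apply: subset_leq_card.
have cC : #|~: Ls| = Q ^ 2 + Q + 1 - (q ^ 2 + q + 1) by rewrite cardsCs setCK -cardsT cL cLs.
have sub2 : E \subset (E :&: Ls) :|: ~: Ls.
  by apply/subsetP => l lE; rewrite in_setU in_setI in_setC lE; case: (l \in Ls).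
have := subset_leq_card sub2; have := leq_card_setU (E :&: Ls) (~: Ls).
rewrite cC /Q => h1 h2.
have e : (q ^ 2) ^ 2 = q ^ 2 * q ^ 2 by rewrite expnS expn1.
move: cE; rewrite /Q => cE; move: h1 h2; rewrite ?e => h1 h2.
have : q <= q ^ 2 by case: (posnP q) => [->|qp] //; rewrite expnS expn1 leq_pmulr.
case: h1 => h1 _; move: (q ^ 2) cE h1 h2 => t; move: #|E| #|E :&: Ls| #|E :&: Ls :|: ~: Ls| => a b c.
nia.
Qed.
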